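(* Assume $m=n$. Let $\mathbf g=(g_1,\dots,g_n)\in\mathbb F_{q^m}^n$ have $\mathbb F_q$-linearly independent coordinates, let $1\le k\le n$, and let $V\subseteq\mathbb F_{q^m}$ be an $\mathbb F_q$-subspace of dimension $s$ with $0<s<m$. Then there exists $Q\in\mathcal L_{q^m}$ of $q$-degree $m-s$ such that $$\mathcal G(\mathbf g,k)\cap V^n=\Bigl\{\bigl((Q\circ A)(g_1),\dots,(Q\circ A)(g_n)\bigr)\;:\;A\in\mathcal L_{q^m},\ \deg_q(A)<k-(m-s)\Bigr\}.$$
   Context: A $q$-polynomial over $\mathbb F_{q^m}$ is $P(x)=\sum_{i=0}^d a_ix^{q^i}$, $a_i\in\mathbb F_{q^m}$; its $q$-degree is the largest $i$ with $a_i\ne0$ ($-\infty$ for $P=0$). $\mathcal L_{q^m}$ is the ring of $q$-polynomials under addition and composition $\circ$. The Gabidulin code is $\mathcal G(\mathbf g,k)=\{(F(g_1),\dots,F(g_n)):F\in\mathcal L_{q^m},\ \deg_qF<k\}$ (equivalently generated by the rows of $(g_j^{q^i})_{0\le i<k,\,1\le j\le n}$). $V^n=V\times\cdots\times V$ ($n$ times). *)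

(* Defs.v *)
From HB Require Import structures.
From mathcomp Require Import all_boot all_order all_algebra all_field.
Set Implicit Arguments. Unset Strict Implicit. Unset Printing Implicit Defensive.
Import GRing.Theory.
Local Open Scope ring_scope.

(* F plays the role of F_q (q = #|F|), L the role of F_{q^m} with
   m = \dim {:L} = [L : F].  A q-polynomial P(x) = sum_i a_i x^(q^i) is
   represented by its coefficient polynomial sum_i a_i 'X^i : {poly L}. *)

Definition qeval (F : finFieldType) (L : fieldExtType F) (P : {poly L}) (x : L) : L :=
  \sum_(i < size P) P`_i * x ^+ (#|F| ^ i)%N.

Definition qdeg_eq (L : nzRingType) (P : {poly L}) (d : nat) : bool :=
  (P != 0) && ((size P).-1 == d)%N.

Definition qdeg_lt (L : nzRingType) (P : {poly L}) (t : int) : bool :=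
  (P == 0) || (((size P).-1)%:Z < t)%R.

Definition in_gabidulin (F : finFieldType) (L : fieldExtType F) (n : nat)
    (g : n.-tuple L) (k : nat) (c : 'rV[L]_n) : Prop :=
  exists P : {poly L}, qdeg_lt P k%:Z /\ c = \row_j qeval P (tnth g j).

(* Main.v *)
Require Import Defs.
From HB Require Import structures.
From mathcomp Require Import all_boot all_order all_algebra all_field.
From mathcomp Require Import zify.
Import GRing.Theory.
Local Open Scope ring_scope.

Section S.
Variables (F : finFieldType) (L : fieldExtType F).
Local Notation q := #|F|.

Lemma q_gt1 : (1 < q)%N. Proof. exact: finNzRing_gt1. Qed.

Lemma frobD1 (x y : L) : (x + y) ^+ q = x ^+ q + y ^+ q.
Proof.
have [p _ pcharFp] := finPcharP F; rewrite (card_pprimeChar pcharFp).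
elim: (logn _ _) => // n IHn; rewrite expnSr !exprM {}IHn.
by rewrite -(pchar_lalg L) in pcharFp; rewrite -!(pFrobenius_autE pcharFp) rmorphD.
Qed.

Definition fr (i : nat) (x : L) := x ^+ (q ^ i).

Lemma fr_zmod i : zmod_morphism (fr i).
Proof.
move=> x y; rewrite /fr; elim: i => [|i IH]; first by rewrite !expn0 !expr1.
rewrite expnSr !exprM IH.
have N: forall z : L, (- z) ^+ q = - z ^+ q.
  move=> z; apply/eqP; rewrite -subr_eq0 opprK -frobD1 addNr expr0n /=.
  by rewrite eqn0Ngt (ltn_trans _ q_gt1).
by rewrite frobD1 N.
Qed.

Lemma fr_mon i : monoid_morphism (fr i).
Proof. by split=> [|x y]; rewrite /fr ?expr1n ?exprMn. Qed.

HB.instance Definition _ i := GRing.isZmodMorphism.Build L L (fr i) (fr_zmod i).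
HB.instance Definition _ i := GRing.isMonoidMorphism.Build L L (fr i) (fr_mon i).

Lemma frS i x : fr i.+1 x = fr 1 (fr i x).
Proof. by rewrite /fr expn1 expnSr exprM. Qed.

Lemma frD i j x : fr (i + j) x = fr j (fr i x).
Proof. by rewrite /fr expnD exprM. Qed.

Lemma frA i (a : F) : fr i (a%:A : L) = a%:A.
Proof.
elim: i => [|i IH]; first by rewrite /fr expn0 expr1.
by rewrite frS IH /fr expn1 -in_algE -rmorphXn expf_card.
Qed.

Lemma fr_full (x : L) : fr (\dim {:L}) x = x.
Proof.
have := Fermat's_little_theorem {:L}%AS x.
by rewrite memvf dimvf => /esym/eqP.
Qed.


Lemma size_Cmul_leq c (P : {poly L}) : (size (c%:P * P)%R <= size P)%N.
Proof. by rewrite mul_polyC size_scale_leq. Qed.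

Lemma size_mulXn_leq i (P : {poly L}) : (size (P * 'X^i)%R <= i + size P)%N.
Proof. by have [->|nz] := eqVneq P 0; rewrite ?mul0r ?size_poly0 // size_mulXn. Qed.

Lemma size_map_fr i (A : {poly L}) : size (map_poly (fr i) A) = size A.
Proof. exact: size_map_poly. Qed.

Lemma qevalE (P : {poly L}) x N : (size P <= N)%N ->
  qeval P x = \sum_(i < N) P`_i * fr i x.
Proof.
move=> hN; rewrite /qeval (big_ord_widen N (fun i => P`_i * fr i x)) //.
rewrite big_mkcond; apply: eq_bigr => i _; case: ifP => // /negbT.
by rewrite -leqNgt => h; rewrite nth_default // mul0r.
Qed.

Lemma qevalF (P : {poly L}) x : qeval P x = \sum_(i < size P) P`_i * fr i x.
Proof. by []. Qed.

Lemma qeval0p x : qeval (0 : {poly L}) x = 0.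
Proof. by rewrite /qeval size_poly0 big_ord0. Qed.

Lemma qevalDp (P R : {poly L}) x : qeval (P + R) x = qeval P x + qeval R x.
Proof.
pose N := maxn (size P) (size R).
rewrite (qevalE _ x _ (leq_trans (size_polyD _ _) (leqnn N))).
rewrite (qevalE _ x _ (leq_maxl _ _ : (size P <= N)%N)) (qevalE _ x _ (leq_maxr _ _ : (size R <= N)%N)).
by rewrite -big_split; apply: eq_bigr => i _; rewrite coefD mulrDl.
Qed.

Lemma qevalNp (P : {poly L}) x : qeval (- P) x = - qeval P x.
Proof.
rewrite (qevalE _ x _ (eq_leq (size_polyN P))) /qeval -sumrN.
by apply: eq_bigr => i _; rewrite coefN mulNr.
Qed.

Lemma qevalBp (P R : {poly L}) x : qeval (P - R) x = qeval P x - qeval R x.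
Proof. by rewrite qevalDp qevalNp. Qed.

Lemma qeval_sump I (r : seq I) (Pr : pred I) (G : I -> {poly L}) x :
  qeval (\sum_(i <- r | Pr i) G i) x = \sum_(i <- r | Pr i) qeval (G i) x.
Proof. by apply: (big_morph (fun P => qeval P x)) => [P R|]; rewrite ?qevalDp ?qeval0p. Qed.

Lemma qevalCMp c (P : {poly L}) x : qeval (c%:P * P) x = c * qeval P x.
Proof.
rewrite (qevalE _ x _ (size_Cmul_leq c P)) /qeval mulr_sumr.
by apply: eq_bigr => i _; rewrite coefCM mulrA.
Qed.

Lemma qevalXn (P : {poly L}) i x : qeval (P * 'X^i) x = qeval P (fr i x).
Proof.
rewrite (qevalE _ x _ (size_mulXn_leq i P)) big_split_ord /= big1 ?add0r => [|j _].
  rewrite /qeval; apply: eq_bigr => j _; rewrite coefMXn /= ltnNge leq_addr /=.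
  by rewrite addKn frD.
by rewrite coefMXn /= ltn_ord mul0r.
Qed.

Lemma qeval_map i (A : {poly L}) x :
  qeval (map_poly (fr i) A) (fr i x) = fr i (qeval A x).
Proof.
rewrite (qevalE _ _ _ (eq_leq (size_map_fr i A))).
rewrite qevalF rmorph_sum; apply: eq_bigr => j _.
by rewrite coef_map rmorphM /= -!frD addnC.
Qed.


Lemma qeval_add (P : {poly L}) x y : qeval P (x + y) = qeval P x + qeval P y.
Proof. by rewrite !qevalF -big_split; apply: eq_bigr => i _; rewrite rmorphD mulrDr. Qed.

Lemma qeval_zero (P : {poly L}) : qeval P 0 = 0.
Proof. by rewrite !qevalF big1 // => i _; rewrite rmorph0 mulr0. Qed.

Lemma qeval_opp (P : {poly L}) x : qeval P (- x) = - qeval P x.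
Proof. by rewrite !qevalF -sumrN; apply: eq_bigr => i _; rewrite rmorphN mulrN. Qed.

Lemma qeval_scale (P : {poly L}) (a : F) x : qeval P (a *: x) = a *: qeval P x.
Proof.
rewrite !qevalF scaler_sumr; apply: eq_bigr => i _.
by rewrite -[a *: x]mulr_algl -[a *: (_ * _)]mulr_algl rmorphM /= frA mulrCA.
Qed.

Lemma qeval_sumx (P : {poly L}) I (r : seq I) (Pr : pred I) (G : I -> L) :
  qeval P (\sum_(i <- r | Pr i) G i) = \sum_(i <- r | Pr i) qeval P (G i).
Proof. by apply: (big_morph (qeval P)) => [x y|]; rewrite ?qeval_add ?qeval_zero. Qed.

Lemma qevalC c x : qeval (c%:P : {poly L}) x = c * x.
Proof.
rewrite (qevalE _ x 1 (size_polyC_leq1 c)) big_ord1 coefC eqxx.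
by rewrite /fr expn0 expr1.
Qed.

Definition qcomp (Q A : {poly L}) : {poly L} :=
  \sum_(i < size Q) (Q`_i)%:P * map_poly (fr i) A * 'X^i.

Lemma qcompE (Q A : {poly L}) N : (size Q <= N)%N ->
  qcomp Q A = \sum_(i < N) (Q`_i)%:P * map_poly (fr i) A * 'X^i.
Proof.
move=> hN; rewrite /qcomp (big_ord_widen N (fun i => (Q`_i)%:P * map_poly (fr i) A * 'X^i)) //.
rewrite big_mkcond; apply: eq_bigr => i _; case: ifP => // /negbT.
by rewrite -leqNgt => h; rewrite nth_default // !mul0r.
Qed.

Lemma qeval_comp (Q A : {poly L}) x : qeval (qcomp Q A) x = qeval Q (qeval A x).
Proof.
rewrite /qcomp qeval_sump (qevalF Q); apply: eq_bigr => i _.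
by rewrite -mulrA qevalCMp qevalXn qeval_map.
Qed.

Lemma qcomp0r (Q : {poly L}) : qcomp Q 0 = 0.
Proof. by rewrite /qcomp big1 // => i _; rewrite map_poly0 mulr0 mul0r. Qed.

Lemma qcomp0l (A : {poly L}) : qcomp 0 A = 0.
Proof. by rewrite /qcomp size_poly0 big_ord0. Qed.

Lemma qcompDl (Q1 Q2 A : {poly L}) : qcomp (Q1 + Q2) A = qcomp Q1 A + qcomp Q2 A.
Proof.
pose N := maxn (size Q1) (size Q2).
rewrite (qcompE _ A _ (leq_trans (size_polyD _ _) (leqnn N))).
rewrite (qcompE _ A _ (leq_maxl _ _ : (size Q1 <= N)%N)) (qcompE _ A _ (leq_maxr _ _ : (size Q2 <= N)%N)).
by rewrite -big_split; apply: eq_bigr => i _; rewrite coefD polyCD !mulrDl.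
Qed.

Lemma qcompDr (Q A1 A2 : {poly L}) : qcomp Q (A1 + A2) = qcomp Q A1 + qcomp Q A2.
Proof.
by rewrite /qcomp -big_split; apply: eq_bigr => i _; rewrite raddfD mulrDr mulrDl.
Qed.

Lemma qcompNl (Q A : {poly L}) : qcomp (- Q) A = - qcomp Q A.
Proof.
rewrite (qcompE _ A _ (eq_leq (size_polyN Q))) /qcomp -sumrN.
by apply: eq_bigr => i _; rewrite coefN polyCN !mulNr.
Qed.

Lemma qcompNr (Q A : {poly L}) : qcomp Q (- A) = - qcomp Q A.
Proof.
by rewrite /qcomp -sumrN; apply: eq_bigr => i _; rewrite raddfN mulrN mulNr.
Qed.


Lemma size_qterm_le (Q A : {poly L}) i :
  (size ((Q`_i)%:P * map_poly (fr i) A * 'X^i)%R <= i + size A)%N.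
Proof.
apply: leq_trans (size_mulXn_leq _ _) _; rewrite leq_add2l.
by apply: leq_trans (size_Cmul_leq _ _) _; rewrite size_map_fr.
Qed.

Lemma size_qcomp_le (Q A : {poly L}) : (size (qcomp Q A) <= (size Q + size A).-1)%N.
Proof.
rewrite /qcomp; apply: (big_ind (fun p : {poly L} => size p <= (size Q + size A).-1)%N).
- by rewrite size_poly0.
- by move=> p1 p2 h1 h2; apply: leq_trans (size_polyD _ _) _; rewrite geq_max h1 h2.
move=> i _; apply: leq_trans (size_qterm_le _ _ _) _.
have := ltn_ord i; lia.
Qed.

Lemma qcomp_lead (Q A : {poly L}) : Q != 0 -> A != 0 ->
  size (qcomp Q A) = (size Q + size A).-1 /\
  lead_coef (qcomp Q A) = lead_coef Q * fr (size Q).-1 (lead_coef A).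
Proof.
move=> nzQ nzA; set d := (size Q).-1.
have sQ : size Q = d.+1 by rewrite /d prednK // size_poly_gt0.
have sA : (0 < size A)%N by rewrite size_poly_gt0.
have lQ : Q`_d = lead_coef Q by rewrite /lead_coef sQ.
have nzm : map_poly (fr d) A != 0 by rewrite -size_poly_eq0 size_map_fr size_poly_eq0.
have nzl : lead_coef Q != 0 by rewrite lead_coef_eq0.
have nzT : (Q`_d)%:P * map_poly (fr d) A != 0 by rewrite mulf_eq0 negb_or polyC_eq0 lQ nzl.
have sT : size ((Q`_d)%:P * map_poly (fr d) A * 'X^d) = (d + size A)%N.
  by rewrite size_mulXn // lQ size_Cmul // size_map_fr.
have sR : (size (\sum_(i < d) (Q`_(widen_ord (leqnSn d) i))%:P * map_poly (fr (widen_ord (leqnSn d) i)) A * 'X^(widen_ord (leqnSn d) i))%R < d + size A)%N.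
  apply: (big_ind (fun p : {poly L} => size p < d + size A)%N).
  - by rewrite size_poly0; lia.
  - by move=> p1 p2 h1 h2; apply: leq_ltn_trans (size_polyD _ _) _; rewrite gtn_max h1 h2.
  move=> i _; apply: leq_ltn_trans (size_qterm_le _ _ _) _.
  have := ltn_ord i; rewrite /=; lia.
rewrite /qcomp sQ big_ord_recr /=.
split; first by rewrite addrC size_polyDl sT //; lia.
rewrite lead_coefDr ?sT // lead_coef_Mmonic ?monicXn // lead_coefM lead_coefC.
by rewrite lQ lead_coef_map.
Qed.

Lemma qcomp_eq0 (Q A : {poly L}) : Q != 0 -> qcomp Q A = 0 -> A = 0.
Proof.
move=> nzQ h; apply/eqP; apply/negPn/negP => nzA.
have [s _] := qcomp_lead _ _ nzQ nzA; move: s; rewrite h size_poly0.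
have := size_poly_gt0 Q; rewrite nzQ; have := size_poly_gt0 A; rewrite nzA; lia.
Qed.


Definition ordp (P : {poly L}) : {poly L} := \sum_(i < size P) (P`_i)%:P * 'X^(q ^ i).

Lemma horner_ordp P x : (ordp P).[x] = qeval P x.
Proof.
by rewrite /ordp horner_sum /qeval; apply: eq_bigr => i _; rewrite hornerCM hornerXn.
Qed.

Lemma coef_ordp P j : (ordp P)`_j = \sum_(i < size P) P`_i * (j == (q ^ i)%N)%:R.
Proof. by rewrite /ordp coef_sum; apply: eq_bigr => i _; rewrite coefCM coefXn. Qed.

Lemma ordp_nz (P : {poly L}) : P != 0 -> ordp P != 0.
Proof.
move=> nzP; set d := (size P).-1.
have ltd : (d < size P)%N by rewrite /d prednK // size_poly_gt0.
apply/eqP => h; move: (lead_coef_eq0 P); rewrite (negbTE nzP) /lead_coef -/d.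
have := congr1 (fun p : {poly L} => p`_((q ^ d)%N)) h; rewrite coef_ordp coef0 /=.
rewrite (bigD1 (Ordinal ltd)) //= eqxx mulr1 big1 ?addr0 => [-> |i].
  by rewrite eqxx.
rewrite eqn_exp2l ?q_gt1 // => /negbTE hi.
have -> : (d == i) = false by rewrite eq_sym; apply/negbTE; move: hi; rewrite -val_eqE /= => ->.
by rewrite mulr0.
Qed.

Lemma ordp_size (P : {poly L}) : (size (ordp P) <= (q ^ (size P).-1).+1)%N.
Proof.
apply/leq_sizeP => j hj; rewrite coef_ordp big1 // => i _.
suff -> : (j == (q ^ i)%N) = false by rewrite mulr0.
apply/negbTE; rewrite neq_ltn; apply/orP; right.
apply: leq_trans hj; rewrite ltnS leq_exp2l ?q_gt1 //.
by have := ltn_ord i; lia.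
Qed.

Lemma qroot_dim (P : {poly L}) (U : {vspace L}) : P != 0 ->
  (forall u, u \in U -> qeval P u = 0) -> (\dim U < size P)%N.
Proof.
move=> nzP hU.
pose rs := enum (U : {vspace finvect_type L}).
have h := max_poly_roots (ordp_nz _ nzP) _ (enum_uniq _ : uniq rs).
have : (size rs < size (ordp P))%N.
  apply: h; apply/allP => x hx.
  have := @mem_enum (finvect_type L) (U : {vspace finvect_type L}) x.
  rewrite hx => /esym xU.
  by rewrite /root horner_ordp hU.
rewrite -cardE card_vspace => h2.
have h3 := leq_trans h2 (ordp_size P).
rewrite ltnS leq_exp2l ?q_gt1 // in h3.
by apply: (leq_ltn_trans h3); rewrite ltn_predL size_poly_gt0.
Qed.


Lemma qeval_span (P : {poly L}) (X : seq L) v : v \in span X ->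
  (forall u, u \in X -> qeval P u = 0) -> qeval P v = 0.
Proof.
move=> hv hX; rewrite (@coord_span _ _ _ (in_tuple X) v hv); rewrite qeval_sumx big1 // => i _.
by rewrite qeval_scale hX ?scaler0 // mem_nth.
Qed.

Lemma qevalX x : qeval ('X : {poly L}) x = fr 1 x.
Proof. by rewrite -['X]mul1r -[X in _ * X]expr1 qevalXn qevalC mul1r. Qed.

Lemma subspace_poly (us : seq L) : exists P : {poly L},
  [/\ P \is monic, size P = (size us).+1 & forall u, u \in us -> qeval P u = 0].
Proof.
elim: us => [|u us [P [mP sP hP]]].
  by exists 1; split; rewrite ?monic1 ?size_poly1.
pose c := (qeval P u) ^+ q.-1.
have nzP : P != 0 by apply: monic_neq0.
have nzT : ('X - c%:P : {poly L}) != 0 by rewrite -size_poly_eq0 size_XsubC.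
have [s1 l1] := qcomp_lead _ _ nzT nzP.
have hT y : qeval ('X - c%:P) y = y ^+ q - c * y.
  by rewrite qevalBp qevalX qevalC /fr expn1.
exists (qcomp ('X - c%:P) P); split.
- by rewrite monicE l1 lead_coefXsubC mul1r (eqP mP) rmorph1.
- by rewrite s1 size_XsubC sP.
move=> v; rewrite in_cons => /orP [/eqP -> | vus].
  rewrite qeval_comp hT /c -exprSr prednK ?subrr //.
  by apply: leq_trans (ltnW q_gt1).
rewrite qeval_comp hP // hT mulr0 subr0 expr0n.
by have -> : (q == 0%N) = false by rewrite eqn0Ngt (ltn_trans _ q_gt1).
Qed.


Lemma size_sub_lead (P T : {poly L}) : size T = size P -> lead_coef T = lead_coef P ->
  (0 < size P)%N -> (size (P - T)%R < size P)%N.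
Proof.
move=> sT lT sP; rewrite -(prednK sP) ltnS; apply/leq_sizeP => j hj.
rewrite coefB; move: hj; rewrite leq_eqVlt => /orP [/eqP <- | hj].
  by move: lT; rewrite /lead_coef sT => ->; rewrite subrr.
rewrite !nth_default ?subrr //; [rewrite sT|]; by move: hj; rewrite (prednK sP).
Qed.

Lemma monoXn_lead (a : L) e : a != 0 ->
  size (a%:P * 'X^e) = e.+1 /\ lead_coef (a%:P * 'X^e) = a.
Proof.
move=> nza; rewrite size_mulXn ?polyC_eq0 // size_polyC nza addn1; split => //.
by rewrite lead_coef_Mmonic ?monicXn // lead_coefC.
Qed.

Lemma qdivl (D : {poly L}) : D \is monic -> ((size D).-1 <= \dim {:L})%N ->
  forall P, exists A R, P = qcomp D A + R /\ (size R < size D)%N.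
Proof.
move=> mD hd P; have nzD : D != 0 by apply: monic_neq0.
have sD : (0 < size D)%N by rewrite size_poly_gt0.
move: {2}(size P) (leqnn (size P)) => N; elim: N P => [|N IH] P hP.
  by exists 0, P; rewrite qcomp0r add0r; split => //; lia.
have [lt|ge] := ltnP (size P) (size D).
  by exists 0, P; rewrite qcomp0r add0r.
have nzP : P != 0 by rewrite -size_poly_eq0; lia.
set e := (size P - size D)%N; set a := lead_coef P.
have nza : a != 0 by rewrite lead_coef_eq0.
set cc := fr (\dim {:L} - (size D).-1) a.
have nzc : cc != 0 by rewrite fmorph_eq0.
have [sM lM] := monoXn_lead _ e nzc.
have nzM : cc%:P * 'X^e != 0 by rewrite -size_poly_eq0 sM.
have [sT lT] := qcomp_lead _ _ nzD nzM.
have hsub : (size (P - qcomp D (cc%:P * 'X^e))%R < size P)%N.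
  apply: size_sub_lead.
  - by rewrite sT sM /e; lia.
  - rewrite lT lM (eqP mD) mul1r /cc -frD subnK // fr_full //.
  - lia.
have [A [R [eq hR]]] := IH _ (leq_trans (leq_trans hsub hP) (leqnn _) : (size _ <= N)%N).
exists (cc%:P * 'X^e + A), R; split => //.
by rewrite qcompDr -addrA -eq addrC subrK.
Qed.

Lemma qdivr (D : {poly L}) : D \is monic ->
  forall P, exists B R, P = qcomp B D + R /\ (size R < size D)%N.
Proof.
move=> mD P; have nzD : D != 0 by apply: monic_neq0.
have sD : (0 < size D)%N by rewrite size_poly_gt0.
move: {2}(size P) (leqnn (size P)) => N; elim: N P => [|N IH] P hP.
  by exists 0, P; rewrite qcomp0l add0r; split => //; lia.
have [lt|ge] := ltnP (size P) (size D).
  by exists 0, P; rewrite qcomp0l add0r.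
have nzP : P != 0 by rewrite -size_poly_eq0; lia.
set e := (size P - size D)%N; set a := lead_coef P.
have nza : a != 0 by rewrite lead_coef_eq0.
have [sM lM] := monoXn_lead _ e nza.
have nzM : a%:P * 'X^e != 0 by rewrite -size_poly_eq0 sM.
have [sT lT] := qcomp_lead _ _ nzM nzD.
have hsub : (size (P - qcomp (a%:P * 'X^e) D)%R < size P)%N.
  apply: size_sub_lead.
  - by rewrite sT sM /e; lia.
  - by rewrite lT lM (eqP mD) rmorph1 mulr1.
  - lia.
have [B [R [eq hR]]] := IH _ (leq_trans (leq_trans hsub hP) (leqnn _) : (size _ <= N)%N).
exists (a%:P * 'X^e + B), R; split => //.
by rewrite qcompDl -addrA -eq addrC subrK.
Qed.


Lemma qeval_vspace (P : {poly L}) (X : seq L) (W : {vspace L}) v : v \in span X ->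
  (forall u, u \in X -> qeval P u \in W) -> qeval P v \in W.
Proof.
move=> hv hX; rewrite (@coord_span _ _ _ (in_tuple X) v hv); rewrite qeval_sumx; apply: rpred_sum => i _.
by rewrite qeval_scale; apply: rpredZ; apply: hX; rewrite mem_nth.
Qed.

Lemma arith1 (k s m a : nat) : (0 < a)%N -> (s < m)%N ->
  (((m - s).+1 + a).-2)%:Z < k%:Z -> ((a.-1)%:Z < k%:Z - (m%:Z - s%:Z)).
Proof. move=> *; lia. Qed.

Lemma arith2 (k s m a b : nat) : (0 < a)%N -> (s < m)%N ->
  ((a.-1)%:Z < k%:Z - (m%:Z - s%:Z)) -> (b <= ((m - s).+1 + a).-1)%N -> (b.-1)%:Z < k%:Z.
Proof. move=> *; lia. Qed.

Lemma main_aux (n : nat) (g : n.-tuple L) (k s : nat) (V : {vspace L}) :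
  n = \dim {: L}%VS ->
  free g ->
  (1 <= k <= n)%N ->
  \dim V = s ->
  (0 < s < \dim {: L}%VS)%N ->
  exists Q : {poly L},
    qdeg_eq Q (\dim {: L}%VS - s)%N /\
    forall c : 'rV[L]_n,
      (in_gabidulin g k c /\ (forall j, c 0 j \in V)) <->
      (exists A : {poly L},
          qdeg_lt A (k%:Z - ((\dim {: L}%VS)%:Z - s%:Z)) /\
          c = \row_j qeval Q (qeval A (tnth g j))).
Proof.
move=> hn fg hk hV hs; set m := \dim {:L}%VS.
have gspan : forall x : L, x \in <<g>>%VS.
  move=> x; suff -> : <<g>>%VS = fullv by rewrite memvf.
  apply/eqP; rewrite eqEdim subvf /=; move/eqP: fg => ->.
  by rewrite size_tuple hn.
have [PV [mPV sPV hPV0]] := subspace_poly (vbasis V).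
rewrite size_tuple hV in sPV.
have nzPV : PV != 0 by apply: monic_neq0.
have hPV : forall v, v \in V -> qeval PV v = 0.
  move=> v vV; apply: (qeval_span _ (vbasis V)) => //.
  by rewrite (span_basis (vbasisP V)).
have kerPV : forall v, qeval PV v = 0 -> v \in V.
  move=> v hv; apply/negPn/negP => vV.
  have fr2 : free (v :: vbasis V).
    by rewrite free_cons (span_basis (vbasisP V)) vV (basis_free (vbasisP V)).
  have dU : \dim <<v :: vbasis V>>%VS = s.+1 by rewrite (eqP fr2) /= size_tuple hV.
  have := qroot_dim _ <<v :: vbasis V>>%VS nzPV.
  rewrite dU sPV ltnn => H; suff: false by []; apply: H => u hu.
  apply: (qeval_span _ (v :: vbasis V)) => // w; rewrite in_cons => /orP [/eqP -> //|].
  by move/vbasis_mem; apply: hPV.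
(* Z = x^{q^m} - x *)
set Z : {poly L} := 'X^m - 1.
have hZ : forall x, qeval Z x = 0.
  move=> x; rewrite qevalBp -['X^m]mul1r qevalXn !qevalC !mul1r fr_full subrr //.
have mZ : Z \is monic by rewrite monicXnsubC // (ltn_trans _ (proj2 (andP hs))) ?(proj1 (andP hs)).
have sZ : size Z = m.+1 by rewrite size_XnsubC // (ltn_trans _ (proj2 (andP hs))) ?(proj1 (andP hs)).
have nzZ : Z != 0 by apply: monic_neq0.
have [M [R' [eqM sR']]] := qdivr _ mPV Z.
have R'0 : R' = 0.
  apply/eqP; apply/negPn/negP => nzR'.
  have := qroot_dim _ V nzR'; rewrite hV; have : (size R' <= s)%N by rewrite -ltnS -sPV.
  move=> h1 h2; have : (s < size R')%N.
    apply: h2 => u uV; have := congr1 (fun P => qeval P u) eqM.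
    by rewrite /= hZ qevalDp qeval_comp hPV // qeval_zero add0r => <-.
  lia.
rewrite R'0 addr0 in eqM.
have nzM : M != 0 by apply: contra_neq nzZ => M0; rewrite eqM M0 qcomp0l.
have [sM _] := qcomp_lead _ _ nzM nzPV; rewrite -eqM sZ sPV in sM.
have hMPV : forall y, qeval M (qeval PV y) = 0.
  by move=> y; rewrite -qeval_comp -eqM hZ.
have hs' : ((size PV).-1 <= m)%N by rewrite sPV; case/andP: hs => _ /ltnW.
have [Q [R [eqQ sR]]] := qdivl _ mPV hs' Z.
have R0 : R = 0.
  apply/eqP; apply/negPn/negP => nzR.
  have nzMR : qcomp M R != 0 by apply/negP => /eqP /(qcomp_eq0 _ _ nzM) /eqP; apply/negP.
  have := qroot_dim _ fullv nzMR.
  have := size_qcomp_le M R; rewrite sPV in sR.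
  move=> h1 h2; have : (m < size (qcomp M R))%N.
    apply: h2 => u _; rewrite qeval_comp.
    have : qeval R u = - qeval PV (qeval Q u).
      by apply/eqP; rewrite -addr_eq0 addrC -qeval_comp -qevalDp -eqQ hZ.
    by move=> ->; rewrite qeval_opp hMPV oppr0.
  move: h1; lia.
rewrite R0 addr0 in eqQ.
have nzQ : Q != 0 by apply: contra_neq nzZ => Q0; rewrite eqQ Q0 qcomp0r.
have [sQ lQ] := qcomp_lead _ _ nzPV nzQ; rewrite -eqQ sZ sPV in sQ.
have sQ' : size Q = (m - s).+1 by move: sQ; lia.
have mQ : Q \is monic.
  move: lQ; rewrite -eqQ (eqP mZ) (eqP mPV) mul1r sPV /= -(rmorph1 (fr s)).
  by move/fmorph_inj => h; rewrite monicE -h.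
have imQ : forall x, qeval Q x \in V.
  by move=> x; apply: kerPV; rewrite -qeval_comp -eqQ hZ.
exists Q; split.
  by rewrite /qdeg_eq nzQ sQ' /=.
move=> c; split.
- move=> [[P [hP ->]] hc].
  have hq' : ((size Q).-1 <= m)%N by rewrite sQ' leq_subr.
  have [A [R2 [eqP2 sR2]]] := qdivl _ mQ hq' P.
  have R20 : R2 = 0.
    have inV : forall x, qeval R2 x \in V.
      move=> x; apply: (qeval_vspace _ g) => // u /(nthP 0) [i ltin <-].
      have ltn' : (i < n)%N by rewrite -(size_tuple g).
      have := hc (Ordinal ltn'); rewrite mxE (tnth_nth 0) /= => hci.
      have e : qeval P (nth 0 g i) = qeval Q (qeval A (nth 0 g i)) + qeval R2 (nth 0 g i).
        by rewrite {1}eqP2 qevalDp qeval_comp.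
      have -> : qeval R2 (nth 0 g i) = qeval P (nth 0 g i) - qeval Q (qeval A (nth 0 g i)).
        by rewrite e addrAC subrr add0r.
      by apply: memvB.
    apply/eqP; apply/negPn/negP => nzR.
    have nzMR : qcomp PV R2 != 0 by apply/negP => /eqP /(qcomp_eq0 _ _ nzPV) /eqP; apply/negP.
    have := qroot_dim _ fullv nzMR.
    have := size_qcomp_le PV R2; rewrite sQ' in sR2.
    move=> h1 h2; have : (m < size (qcomp PV R2))%N.
      by apply: h2 => u _; rewrite qeval_comp hPV.
    move: h1; rewrite sPV; lia.
  rewrite R20 addr0 in eqP2.
  exists A; split.
    have [->|nzA] := eqVneq A 0; first by rewrite /qdeg_lt eqxx.
    have [sP _] := qcomp_lead _ _ nzQ nzA; rewrite -eqP2 sQ' in sP.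
    have nzP : P != 0.
      by rewrite eqP2; apply/negP => /eqP /(qcomp_eq0 _ _ nzQ) /eqP; apply/negP.
    move: hP; rewrite /qdeg_lt (negbTE nzA) (negbTE nzP) /= sP.
    have hA0 : (0 < size A)%N by rewrite size_poly_gt0.
    have hsm : (s < m)%N by case/andP: hs.
    move=> h; exact: (arith1 _ _ _ _ hA0 hsm h).
  by apply/rowP => j; rewrite !mxE eqP2 qeval_comp.
- move=> [A [hA ->]]; split; last by move=> j; rewrite mxE imQ.
  exists (qcomp Q A); split; last by apply/rowP => j; rewrite !mxE qeval_comp.
  rewrite /qdeg_lt; have [->|nzA] := eqVneq A 0; first by rewrite qcomp0r eqxx.
  move: hA; rewrite /qdeg_lt (negbTE nzA) /= => hA; apply/orP; right.
  have := size_qcomp_le Q A; rewrite sQ'.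
  have hA0 : (0 < size A)%N by rewrite size_poly_gt0.
  have hsm : (s < m)%N by case/andP: hs.
  move=> h; exact: (arith2 _ _ _ _ _ hA0 hsm hA h).
Qed.

End S.

Theorem mainTheorem4 (F : finFieldType) (L : fieldExtType F) (n : nat)
    (g : n.-tuple L) (k s : nat) (V : {vspace L}) :
  n = \dim {: L}%VS ->
  free g ->
  (1 <= k <= n)%N ->
  \dim V = s ->
  (0 < s < \dim {: L}%VS)%N ->
  exists Q : {poly L},
    qdeg_eq Q (\dim {: L}%VS - s)%N /\
    forall c : 'rV[L]_n,
      (in_gabidulin g k c /\ (forall j, c 0 j \in V)) <->
      (exists A : {poly L},
          qdeg_lt A (k%:Z - ((\dim {: L}%VS)%:Z - s%:Z)) /\
          c = \row_j qeval Q (qeval A (tnth g j))).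
Proof.
move=> *; apply: main_aux => //.
Qed.
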